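(* Let $x_1,x_2,x_3>0$, $\gamma,\delta>0$ with $\gamma\ne1\ne\delta$, and let $$\mathbf{Q}=\begin{pmatrix}1&\delta x_1&x_2&x_3\\ 1/(\delta x_1)&1&x_2/x_1&x_3/x_1\\ 1/x_2&x_1/x_2&1&\gamma x_3/x_2\\ 1/x_3&x_1/x_3&x_2/(\gamma x_3)&1\end{pmatrix}$$ with principal right eigenvector $\mathbf{w}^{EM}$. Then $\delta>1$ iff $w_1^{EM}/w_2^{EM}<\delta x_1$, and $\delta<1$ iff $w_1^{EM}/w_2^{EM}>\delta x_1$.
   Context: The principal right eigenvector is the positive (Perron) eigenvector belonging to the largest eigenvalue. *)

(* Defs.v *)
From HB Require Import structures.
From mathcomp Require Import all_boot all_order all_algebra.
Set Implicit Arguments. Unset Strict Implicit. Unset Printing Implicit Defensive.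
Import Order.TTheory GRing.Theory Num.Theory.
Local Open Scope ring_scope.

(* The 4x4 pairwise comparison matrix Q of the statement (indices 0..3 stand
   for 1..4 in the paper). *)
Definition Qentry (R : realFieldType) (x1 x2 x3 g d : R) (i j : nat) : R :=
  match i, j with
  | 0, 0 => 1 | 0, 1 => d * x1 | 0, 2 => x2 | 0, 3 => x3
  | 1, 0 => (d * x1)^-1 | 1, 1 => 1 | 1, 2 => x2 / x1 | 1, 3 => x3 / x1
  | 2, 0 => x2^-1 | 2, 1 => x1 / x2 | 2, 2 => 1 | 2, 3 => g * x3 / x2
  | 3, 0 => x3^-1 | 3, 1 => x1 / x3 | 3, 2 => x2 / (g * x3) | _, _ => 1
  end.

Definition Qmx (R : realFieldType) (x1 x2 x3 g d : R) : 'M[R]_4 :=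
  \matrix_(i < 4, j < 4) Qentry x1 x2 x3 g d i j.

Definition principal_right_eigenvector (R : realFieldType) (n : nat)
    (A : 'M[R]_n) (w : 'cV[R]_n) : Prop :=
  (forall i, 0 < w i 0) /\
  exists lam : R, A *m w = lam *: w /\ (forall mu : R, eigenvalue A mu -> mu <= lam).

(* Main.v *)
Require Import Defs.
From HB Require Import structures.
From mathcomp Require Import all_boot all_order all_algebra.
From mathcomp Require Import ring lra.
Import Order.TTheory GRing.Theory Num.Theory.
Local Open Scope ring_scope.

Lemma sum4 (R : realFieldType) (F : 'I_4 -> R) :
  \sum_(j < 4) F j = F 0 + F 1 + F 2 + F 3.
Proof.
rewrite !big_ord_recl big_ord0 addr0 !addrA; congr (_+_+_+_); congr F; exact: val_inj.
Qed.

Theorem mainTheorem11 (R : realFieldType) (x1 x2 x3 g d : R)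
  (hx1 : 0 < x1) (hx2 : 0 < x2) (hx3 : 0 < x3) (hg : 0 < g) (hd : 0 < d)
  (hg1 : g != 1) (hd1 : d != 1) (w : 'cV[R]_4)
  (hw : principal_right_eigenvector (Qmx x1 x2 x3 g d) w) :
  (1 < d <-> w 0 0 / w 1 0 < d * x1) /\ (d < 1 <-> d * x1 < w 0 0 / w 1 0).
Proof.
case: hw => wpos [lam [Hm _]].
have e0 := congr1 (fun M : 'cV[R]_4 => M 0 0) Hm.
have e1 := congr1 (fun M : 'cV[R]_4 => M 1 0) Hm.
rewrite /= !mxE !sum4 !mxE /= in e0 e1.
have := wpos 0; have := wpos 1; have := wpos 2; have := wpos 3.
move: e0 e1.
set a := w 0 0. set b := w 1 0. set c := w 2 0. set e := w 3 0.
move=> e0 e1 he hc hb ha.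
have hT : 0 < x2 * c + x3 * e by rewrite addr_gt0 // mulr_gt0.
have hlam : 0 < lam.
  have : 0 < lam * a by rewrite -e0 !addr_gt0 ?mulr_gt0 // mul1r.
  by rewrite pmulr_lgt0.
have hdx : d * x1 != 0 by rewrite mulf_neq0 // gt_eqF.
have K : lam * (a - d * x1 * b) = (1 - d) * (x2 * c + x3 * e).
  have e1' : d * x1 * (lam * b) = a + d * x1 * b + d * (x2 * c + x3 * e).
    rewrite -e1; field; rewrite ?gt_eqF //.
  rewrite mulrBr -e0 mulrCA e1'; ring.
have U : a - d * x1 * b = (1 - d) * (x2 * c + x3 * e) / lam.
  by rewrite -K; field; rewrite gt_eqF.
have hbx : 0 < d * x1 by rewrite mulr_gt0.
rewrite !ltr_pdivrMr // ltr_pdivlMr //.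
have S1 : 1 < d -> a < d * x1 * b.
  move=> h; rewrite -subr_lt0 U pmulr_llt0 ?invr_gt0 // pmulr_llt0 // subr_lt0 //.
have S2 : d < 1 -> d * x1 * b < a.
  move=> h; rewrite -subr_gt0 U pmulr_lgt0 ?invr_gt0 // pmulr_lgt0 // subr_gt0 //.
have tri : 1 < d \/ d < 1.
  by case: (ltgtP d 1) hd1 => // h _; [right|left].
split; split => // h; case: tri => // h'.
- by have := S2 h'; lra.
- by have := S1 h'; lra.
Qed.
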